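(* Let $\Gamma=(V,E)$ be a graph and for each $v\in V$ let $C_v$ be a left LCM monoid. Then the graph product $C=\Gamma_{v\in V}C_v$ is also a left LCM monoid.
   Context: A graph $\Gamma=(V,E)$ consists of a set $V$ of vertices and an irreflexive symmetric relation $E\subseteq V\times V$. For monoids $C_v$ ($v\in V$, pairwise disjoint), the graph product $\Gamma_{v\in V}C_v$ is the quotient of the free product of the $C_v$ by the congruence generated by all pairs $(mn,nm)$ with $m\in C_u$, $n\in C_v$, $(u,v)\in E$. A left LCM monoid is a right cancellative monoid $C$ in which, for all $a,b\in C$, the intersection $Ca\cap Cb$ of principal left ideals is either empty or a principal left ideal $Cm$ for some $m\in C$. *)

(* Defs.v *)
(* Monoids are given by carrier, multiplication and unit;
   the graph product is represented by words over the disjoint union of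
   the C_v modulo the congruence generated by the defining relations. *)
From Stdlib Require Import List.
Import ListNotations.
Set Implicit Arguments.

Definition is_monoid (T : Type) (mul : T -> T -> T) (one : T) : Prop :=
  (forall a b c, mul a (mul b c) = mul (mul a b) c) /\
  (forall a, mul one a = a) /\ (forall a, mul a one = a).

(* Left LCM monoid, for a monoid presented up to an equivalence relation
   [eqv] compatible with [mul] (for an honest monoid take [eqv := eq]).
   Membership in the principal left ideal C a: *)
Definition in_left_ideal (T : Type) (eqv : T -> T -> Prop) (mul : T -> T -> T)
  (a w : T) : Prop := exists c, eqv w (mul c a).

Definition right_cancellative (T : Type) (eqv : T -> T -> Prop)
  (mul : T -> T -> T) : Prop :=
  forall a b c, eqv (mul a c) (mul b c) -> eqv a b.

Definition left_LCM (T : Type) (eqv : T -> T -> Prop) (mul : T -> T -> T) : Prop :=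
  right_cancellative eqv mul /\
  forall a b : T,
    (forall w, ~ (in_left_ideal eqv mul a w /\ in_left_ideal eqv mul b w)) \/
    (exists m, forall w,
        (in_left_ideal eqv mul a w /\ in_left_ideal eqv mul b w)
        <-> in_left_ideal eqv mul m w).

Definition is_graph (V : Type) (E : V -> V -> Prop) : Prop :=
  (forall v, ~ E v v) /\ (forall u v, E u v -> E v u).

Definition letter (V : Type) (C : V -> Type) := { v : V & C v }.

Inductive gp_rel (V : Type) (E : V -> V -> Prop) (C : V -> Type)
    (mul : forall v, C v -> C v -> C v) (one : forall v, C v)
  : list (letter C) -> list (letter C) -> Prop :=
| gp_refl x : gp_rel E mul one x x
| gp_sym x y : gp_rel E mul one x y -> gp_rel E mul one y x
| gp_trans x y z : gp_rel E mul one x y -> gp_rel E mul one y z ->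
                   gp_rel E mul one x z
| gp_ctx p q x y : gp_rel E mul one x y ->
                   gp_rel E mul one (p ++ x ++ q) (p ++ y ++ q)
| gp_one v : gp_rel E mul one [existT C v (one v)] []
| gp_mul v a b : gp_rel E mul one [existT C v a; existT C v b]
                                  [existT C v (mul v a b)]
| gp_comm u v (m : C u) (n : C v) : E u v ->
    gp_rel E mul one [existT C u m; existT C v n] [existT C v n; existT C u m].

(* Main.v *)
Require Import Defs.
From Stdlib Require Import List Lia Classical ClassicalEpsilon FunctionalExtensionality Eqdep.
Import ListNotations.

Section GP.
Variable V : Type.
Variable E : V -> V -> Prop.
Variable C : V -> Type.
Variable mul : forall v, C v -> C v -> C v.
Variable one : forall v, C v.
Hypothesis Eirr : forall v, ~ E v v.
Hypothesis Esym : forall u v, E u v -> E v u.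
Hypothesis massoc : forall v a b c, mul v a (mul v b c) = mul v (mul v a b) c.
Hypothesis mone_l : forall v a, mul v (one v) a = a.
Hypothesis mone_r : forall v a, mul v a (one v) = a.
Hypothesis mcancel : forall v a b c, mul v a c = mul v b c -> a = b.

Local Notation L := (letter C).
Definition lett (v : V) (b : C v) : L := existT C v b.
Definition dflt (v : V) : L := lett v (one v).

Definition vval (v : V) (z : L) : C v :=
  match excluded_middle_informative (exists b, z = lett v b) with
  | left H => proj1_sig (constructive_indefinite_description _ H)
  | right _ => one v
  end.

Lemma vval_lett v b : vval v (lett v b) = b.
Proof.
  unfold vval. destruct (excluded_middle_informative _) as [H|H].
  - destruct (constructive_indefinite_description _ H) as [b' Hb']. simpl.
    unfold lett in Hb'. apply inj_pairT2 in Hb'. auto.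
  - exfalso; apply H; eauto.
Qed.

Lemma lett_vval v z : projT1 z = v -> z = lett v (vval v z).
Proof. destruct z as [v' b]; simpl; intros ->. rewrite vval_lett. reflexivity. Qed.

Lemma lett_inj v b u c : lett v b = lett u c -> v = u.
Proof. intros H. exact (f_equal (@projT1 _ _) H). Qed.

Lemma lett_inj2 v b c : lett v b = lett v c -> b = c.
Proof. intros H. apply inj_pairT2 in H. auto. Qed.

Definition St := V -> V -> list L.

Definition tail (v : V) (S : St) : Prop :=
  forall w, ~ E v w -> S v w <> [] /\ projT1 (last (S v w) (dflt v)) = v.

Definition tau (v : V) (S : St) : C v :=
  if excluded_middle_informative (tail v S) then vval v (last (S v v) (dflt v)) else one v.

Definition inU (u p q : V) : Prop := (p = u /\ ~ E u q) \/ (q = u /\ ~ E u p).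
Definition Ec (v : V) (c : C v) : list L :=
  if excluded_middle_informative (c = one v) then [] else [lett v c].
Definition trunc (v : V) (S : St) (X : list L) : list L :=
  if excluded_middle_informative (tail v S) then removelast X else X.
Definition Tst (v : V) (S : St) : St := fun p q =>
  if excluded_middle_informative (inU v p q) then trunc v S (S p q) else S p q.
Definition App (v : V) (c : C v) (T : St) : St := fun p q =>
  if excluded_middle_informative (inU v p q) then T p q ++ Ec v c else T p q.
Definition actv (v : V) (a : C v) (S : St) : St := App v (mul v (tau v S) a) (Tst v S).

Definition isv (v : V) (z : L) : bool :=
  if excluded_middle_informative (projT1 z = v) then true else false.
Definition fil (v : V) (l : list L) : list L := filter (isv v) l.

Record Inv (S : St) : Prop := {
  J0 : forall p q, S p q = S q p;
  J1 : forall p q v b, In (lett v b) (S p q) -> (v = p \/ v = q) /\ b <> one v;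
  J2 : forall v w, ~ E v w -> fil v (S v w) = S v v;
  JR : forall v A B, S v v = A ++ B -> A <> [] -> B <> [] ->
       exists w, w <> v /\ ~ E v w /\ exists A' q B',
         S v w = A' ++ q :: B' /\ fil v A' = A /\ fil v B' = B /\ projT1 q = w }.

Definition NT (u : V) (T : St) : Prop :=
  T u u = [] \/ exists w, w <> u /\ ~ E u w /\ T u w <> [] /\ projT1 (last (T u w) (dflt u)) = w.

Lemma In_last (l : list L) d : l <> [] -> In (last l d) l.
Proof. intros H. rewrite (app_removelast_last d H) at 2. apply in_or_app; right; left; auto. Qed.

Lemma In_removelast (l : list L) z : In z (removelast l) -> In z l.
Proof.
  intros H. destruct l as [|x l']; [simpl in H; contradiction|].
  assert (Hne : x :: l' <> []) by discriminate.
  rewrite (app_removelast_last x Hne). apply in_or_app; left; auto.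
Qed.

Lemma last_app_ne (l l' : list L) d : l' <> [] -> last (l ++ l') d = last l' d.
Proof. intros H. rewrite (app_removelast_last d H), app_assoc, !last_last. reflexivity. Qed.

Lemma removelast_cons (q : L) B : B <> [] -> removelast (q :: B) = q :: removelast B.
Proof. destruct B; [congruence|reflexivity]. Qed.

Lemma isv_t v z : projT1 z = v -> isv v z = true.
Proof. unfold isv; destruct (excluded_middle_informative _); auto; contradiction. Qed.
Lemma isv_f v z : projT1 z <> v -> isv v z = false.
Proof. unfold isv; destruct (excluded_middle_informative _); auto; contradiction. Qed.

Lemma fil_app v l l' : fil v (l ++ l') = fil v l ++ fil v l'.
Proof. apply filter_app. Qed.

Lemma fil_one v z : projT1 z = v -> fil v [z] = [z].
Proof. intros H; unfold fil; simpl; rewrite isv_t; auto. Qed.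
Lemma fil_one' v z : projT1 z <> v -> fil v [z] = [].
Proof. intros H; unfold fil; simpl; rewrite isv_f; auto. Qed.

Lemma fil_nil_notin v l z : fil v l = [] -> In z l -> projT1 z <> v.
Proof.
  intros H Hin Heq. unfold fil in H.
  assert (In z (filter (isv v) l)) by (apply filter_In; split; auto; apply isv_t; auto).
  rewrite H in H0; contradiction.
Qed.

Lemma fil_nonempty v l : fil v l <> [] -> l <> [].
Proof. intros H ->; apply H; reflexivity. Qed.

Lemma last_fil v l d d' : l <> [] -> projT1 (last l d) = v -> last (fil v l) d' = last l d /\ fil v l <> [].
Proof.
  intros Hne Hl. rewrite (app_removelast_last d Hne). rewrite fil_app, fil_one by auto.
  rewrite !last_last. split; auto. intro H. apply app_eq_nil in H. destruct H; discriminate.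
Qed.

Lemma fil_rl_v v l d : l <> [] -> projT1 (last l d) = v -> fil v (removelast l) = removelast (fil v l).
Proof.
  intros Hne Hl. rewrite (app_removelast_last d Hne) at 2. rewrite fil_app, fil_one by auto.
  rewrite removelast_last; auto.
Qed.

Lemma fil_rl_nv v l d : l <> [] -> projT1 (last l d) <> v -> fil v (removelast l) = fil v l.
Proof.
  intros Hne Hl. rewrite (app_removelast_last d Hne) at 2. rewrite fil_app, fil_one' by auto.
  rewrite app_nil_r; auto.
Qed.

Lemma In_Ec u c z : In z (Ec u c) -> z = lett u c /\ c <> one u.
Proof. unfold Ec; destruct (excluded_middle_informative _); simpl; intros H; [contradiction|].
  destruct H as [H|H]; [subst; auto|contradiction]. Qed.

Lemma fil_Ec_same u c : fil u (Ec u c) = Ec u c.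
Proof. unfold Ec; destruct (excluded_middle_informative _); auto. apply fil_one; reflexivity. Qed.

Lemma fil_Ec_other v u c : u <> v -> fil v (Ec u c) = [].
Proof. intros H; unfold Ec; destruct (excluded_middle_informative _); auto. apply fil_one'; auto. Qed.


Lemma inU_uw u w : ~ E u w -> inU u u w.
Proof. unfold inU; auto. Qed.
Lemma inU_wu u w : ~ E u w -> inU u w u.
Proof. unfold inU; auto. Qed.
Lemma inU_vv u v : v <> u -> ~ inU u v v.
Proof. unfold inU; intros H [[? ?]|[? ?]]; auto. Qed.
Lemma inU_vw u v w : v <> u -> w <> u -> ~ inU u v w.
Proof. unfold inU; intros H H' [[? ?]|[? ?]]; auto. Qed.
Lemma inU_sym u p q : inU u p q -> inU u q p.
Proof. unfold inU; tauto. Qed.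
Lemma nE_sym u v : ~ E u v -> ~ E v u.
Proof. intros H H'; apply H, Esym, H'. Qed.

Lemma Tst_in v S p q : inU v p q -> Tst v S p q = trunc v S (S p q).
Proof. intros H; unfold Tst; destruct (excluded_middle_informative _); tauto. Qed.
Lemma Tst_out v S p q : ~ inU v p q -> Tst v S p q = S p q.
Proof. intros H; unfold Tst; destruct (excluded_middle_informative _); tauto. Qed.
Lemma App_in v c T p q : inU v p q -> App v c T p q = T p q ++ Ec v c.
Proof. intros H; unfold App; destruct (excluded_middle_informative _); tauto. Qed.
Lemma App_out v c T p q : ~ inU v p q -> App v c T p q = T p q.
Proof. intros H; unfold App; destruct (excluded_middle_informative _); tauto. Qed.

Lemma trunc_t v S X : tail v S -> trunc v S X = removelast X.
Proof. intros H; unfold trunc; destruct (excluded_middle_informative _); tauto. Qed.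
Lemma trunc_f v S X : ~ tail v S -> trunc v S X = X.
Proof. intros H; unfold trunc; destruct (excluded_middle_informative _); tauto. Qed.
Lemma tau_t v S : tail v S -> tau v S = vval v (last (S v v) (dflt v)).
Proof. intros H; unfold tau; destruct (excluded_middle_informative _); tauto. Qed.
Lemma tau_f v S : ~ tail v S -> tau v S = one v.
Proof. intros H; unfold tau; destruct (excluded_middle_informative _); tauto. Qed.
Lemma Ec_one v : Ec v (one v) = [].
Proof. unfold Ec; destruct (excluded_middle_informative _); tauto. Qed.
Lemma Ec_ne v c : c <> one v -> Ec v c = [lett v c].
Proof. intros H; unfold Ec; destruct (excluded_middle_informative _); tauto. Qed.

Lemma In_J1 S p q z : Inv S -> In z (S p q) -> projT1 z = p \/ projT1 z = q.
Proof. intros HI; destruct z as [v b]; intros H. apply (J1 _ HI) in H. simpl; tauto. Qed.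

Lemma Tst_nt v S : ~ tail v S -> Tst v S = S.
Proof.
  intros H. apply functional_extensionality; intro p; apply functional_extensionality; intro q.
  unfold Tst; destruct (excluded_middle_informative _); auto. apply trunc_f; auto.
Qed.

Lemma F1 u S : Inv S -> tail u S -> forall w, ~ E u w ->
  S u w = removelast (S u w) ++ [lett u (tau u S)].
Proof.
  intros HI Ht w Hw. destruct (Ht w Hw) as [Hne Hl].
  assert (Hlast : last (S u u) (dflt u) = last (S u w) (dflt u)).
  { rewrite <- (J2 _ HI u w Hw). apply last_fil; auto. }
  rewrite (tau_t _ _ Ht), Hlast. rewrite <- lett_vval by auto. apply app_removelast_last; auto.
Qed.

Lemma tau_nonone u S : Inv S -> tail u S -> tau u S <> one u.
Proof.
  intros HI Ht. destruct (Ht u (Eirr u)) as [Hne _].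
  pose proof (F1 u S HI Ht u (Eirr u)) as HF.
  assert (In (lett u (tau u S)) (S u u)) by (rewrite HF; apply in_or_app; right; left; auto).
  apply (J1 _ HI) in H. tauto.
Qed.

Lemma notail_NT u S : Inv S -> ~ tail u S -> NT u S.
Proof.
  intros HI Ht. unfold tail in Ht.
  apply not_all_ex_not in Ht. destruct Ht as [w Hw].
  apply imply_to_and in Hw. destruct Hw as [Hw Hn].
  destruct (classic (S u w = [])) as [H0|H0].
  - left. rewrite <- (J2 _ HI u w Hw), H0. reflexivity.
  - right. exists w.
    assert (Hl : projT1 (last (S u w) (dflt u)) <> u) by tauto.
    pose proof (In_J1 S u w _ HI (In_last _ (dflt u) H0)) as Hj.
    assert (projT1 (last (S u w) (dflt u)) = w) by tauto.
    split; [intro; subst; contradiction|]. auto.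
Qed.

Lemma NT_notail u T : NT u T -> ~ tail u T.
Proof.
  intros [H|[w [Hw [HE [Hne Hl]]]]] Ht.
  - destruct (Ht u (Eirr u)); auto.
  - destruct (Ht w HE) as [_ H]. congruence.
Qed.

Lemma last_cons_ne (q : L) B d : B <> [] -> last (q :: B) d = last B d.
Proof. destruct B; [congruence|reflexivity]. Qed.
Lemma last_mid (A' : list L) q B' d : B' <> [] -> last (A' ++ q :: B') d = last B' d.
Proof. intros H. rewrite last_app_ne by discriminate. apply last_cons_ne; auto. Qed.
Lemma mid_ne (A' : list L) q B' : A' ++ q :: B' <> [].
Proof. intro H; apply app_eq_nil in H; destruct H; discriminate. Qed.
Lemma app1_ne (A : list L) z : A ++ [z] <> [].
Proof. intro H; apply app_eq_nil in H; destruct H; discriminate. Qed.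

Lemma neq_from (z : L) u v : projT1 z = u -> v <> u -> projT1 z <> v.
Proof. intros H1 H2 H3. apply H2. rewrite <- H3, H1. reflexivity. Qed.

Lemma Tst_inv u S : Inv S -> Inv (Tst u S) /\ NT u (Tst u S).
Proof.
  intros HI. destruct (classic (tail u S)) as [Ht|Ht];
    [| rewrite Tst_nt by auto; split; auto; apply notail_NT; auto].
  set (t := tau u S).
  assert (HF := F1 u S HI Ht).
  assert (Huw : forall w, ~ E u w -> Tst u S u w = removelast (S u w))
    by (intros; rewrite Tst_in, trunc_t; auto; apply inU_uw; auto).
  assert (Hwu : forall w, ~ E u w -> Tst u S w u = removelast (S w u))
    by (intros; rewrite Tst_in, trunc_t; auto; apply inU_wu; auto).
  assert (Hsub : forall p q z, In z (Tst u S p q) -> In z (S p q)).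
  { intros p q z H. unfold Tst, trunc in H;
    repeat destruct (excluded_middle_informative _); auto using In_removelast. }
  assert (Hne : forall w, ~ E u w -> S u w <> []) by (intros w Hw; apply (Ht w Hw)).
  assert (Hlu : forall w, ~ E u w -> projT1 (last (S u w) (dflt u)) = u) by (intros w Hw; apply (Ht w Hw)).
  split.
  - constructor.
    + intros p q. unfold Tst.
      destruct (excluded_middle_informative (inU u p q)) as [i|i], (excluded_middle_informative (inU u q p)) as [i0|i0].
      * rewrite (J0 _ HI p q); auto.
      * exfalso; apply i0, inU_sym, i.
      * exfalso; apply i, inU_sym, i0.
      * apply (J0 _ HI).
    + intros p q v b H. apply Hsub in H. eapply J1; eauto.
    + intros v w Hvw. destruct (classic (v = u)) as [->|Hvu].
      * rewrite Huw, (Huw u (Eirr u)) by auto. rewrite (fil_rl_v u _ (dflt u)) by auto.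
        rewrite (J2 _ HI); auto.
      * rewrite (Tst_out u S v v) by (apply inU_vv; auto).
        destruct (classic (w = u)) as [->|Hwu'].
        -- assert (HE : ~ E u v) by (apply nE_sym; auto).
           rewrite Hwu by auto. rewrite (J0 _ HI v u).
           rewrite (fil_rl_nv v _ (dflt u)); [|apply Hne; auto|eapply neq_from; [apply Hlu; auto|auto]].
           rewrite <- (J0 _ HI v u). apply (J2 _ HI); auto.
        -- rewrite Tst_out by (apply inU_vw; auto). apply (J2 _ HI); auto.
    + intros v A B Hvv HA HB. destruct (classic (v = u)) as [->|Hvu].
      * rewrite (Huw u (Eirr u)) in Hvv.
        assert (HS : S u u = A ++ (B ++ [lett u t]))
          by (rewrite (HF u (Eirr u)), Hvv, app_assoc; auto).
        destruct (JR _ HI u A (B ++ [lett u t]) HS HA (app1_ne _ _))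
          as [w [Hwv [HE [A' [q [B' [Heq [HfA [HfB Hq]]]]]]]]].
        assert (HB' : B' <> []) by (intro; subst; simpl in HfB; symmetry in HfB; revert HfB; apply app1_ne).
        exists w. split; auto. split; auto. exists A', q, (removelast B').
        rewrite Huw by auto. rewrite Heq. rewrite removelast_app by discriminate.
        rewrite removelast_cons by auto. split; auto. split; auto. split; auto.
        assert (HL : projT1 (last B' (dflt u)) = u)
          by (rewrite <- (last_mid A' q B' (dflt u) HB'), <- Heq; auto).
        rewrite (fil_rl_v u _ (dflt u)) by auto. rewrite HfB. apply removelast_last.
      * rewrite (Tst_out u S v v) in Hvv by (apply inU_vv; auto).
        destruct (JR _ HI v A B Hvv HA HB) as [w [Hwv [HE [A' [q [B' [Heq [HfA [HfB Hq]]]]]]]]].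
        exists w; split; auto; split; auto.
        destruct (classic (w = u)) as [->|Hwu'].
        -- assert (HE' : ~ E u v) by (apply nE_sym; auto).
           assert (HB' : B' <> []) by (intro H0; rewrite H0 in HfB; apply HB; rewrite <- HfB; reflexivity).
           exists A', q, (removelast B').
           rewrite Hwu by auto. rewrite Heq. rewrite removelast_app by discriminate.
           rewrite removelast_cons by auto. split; auto. split; auto. split; auto.
           assert (HL : projT1 (last B' (dflt u)) = u).
           { rewrite <- (last_mid A' q B' (dflt u) HB'), <- Heq, (J0 _ HI v u); auto. }
           rewrite (fil_rl_nv v _ (dflt u)) by (auto; eapply neq_from; eauto). auto.
        -- rewrite Tst_out by (apply inU_vw; auto). exists A', q, B'; auto.
  - unfold NT. rewrite (Huw u (Eirr u)).
    destruct (classic (removelast (S u u) = [])) as [H0|H0]; [left; auto|right].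
    destruct (JR _ HI u (removelast (S u u)) [lett u t] (HF u (Eirr u)) H0 ltac:(discriminate))
      as [w [Hwv [HE [A' [q [B' [Heq [HfA [HfB Hq]]]]]]]]].
    assert (HB' : B' <> []) by (intro; subst; simpl in HfB; discriminate).
    exists w. split; auto. split; auto. rewrite Huw by auto. rewrite Heq.
    rewrite removelast_app by discriminate. rewrite removelast_cons by auto.
    split; [apply mid_ne|].
    assert (HL : projT1 (last B' (dflt u)) = u) by (rewrite <- (last_mid A' q B' (dflt u) HB'), <- Heq; auto).
    assert (Hf0 : fil u (removelast B') = []) by (rewrite (fil_rl_v u _ (dflt u)) by auto; rewrite HfB; reflexivity).
    rewrite last_app_ne by discriminate.
    pose proof (In_last (q :: removelast B') (dflt u) ltac:(discriminate)) as Hin.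
    destruct Hin as [Hz|Hz].
    + rewrite <- Hz; auto.
    + assert (Hz' : In (last (q :: removelast B') (dflt u)) (S u w)).
      { rewrite Heq. apply in_or_app; right; right. apply In_removelast; auto. }
      destruct (In_J1 _ _ _ _ HI Hz') as [Hp|Hp]; auto.
      exfalso. eapply fil_nil_notin; eauto.
Qed.

Lemma App_inv u c T : Inv T -> NT u T -> Inv (App u c T).
Proof.
  intros HI HN.
  assert (Huw : forall w, ~ E u w -> App u c T u w = T u w ++ Ec u c)
    by (intros; apply App_in, inU_uw; auto).
  assert (Hwu : forall w, ~ E u w -> App u c T w u = T w u ++ Ec u c)
    by (intros; apply App_in, inU_wu; auto).
  constructor.
  - intros p q. unfold App.
    destruct (excluded_middle_informative (inU u p q)) as [i|i], (excluded_middle_informative (inU u q p)) as [i0|i0].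
    + rewrite (J0 _ HI p q); auto.
    + exfalso; apply i0, inU_sym, i.
    + exfalso; apply i, inU_sym, i0.
    + apply (J0 _ HI).
  - intros p q v b H. unfold App in H. destruct (excluded_middle_informative _) as [i|i].
    + apply in_app_or in H. destruct H as [H|H]; [eapply J1; eauto|].
      apply In_Ec in H. destruct H as [H1 H2].
      pose proof (lett_inj _ _ _ _ H1) as Hv. subst v. apply lett_inj2 in H1. subst b.
      split; auto. destruct i as [[-> _]|[-> _]]; auto.
    + eapply J1; eauto.
  - intros v w Hvw. destruct (classic (v = u)) as [->|Hvu].
    + rewrite Huw, (Huw u (Eirr u)) by auto. rewrite fil_app, fil_Ec_same, (J2 _ HI); auto.
    + rewrite (App_out u c T v v) by (apply inU_vv; auto).
      destruct (classic (w = u)) as [->|Hwu'].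
      * rewrite Hwu by (apply nE_sym; auto). rewrite fil_app, fil_Ec_other, app_nil_r by (intro; subst; auto).
        apply (J2 _ HI); auto.
      * rewrite App_out by (apply inU_vw; auto). apply (J2 _ HI); auto.
  - intros v A B Hvv HA HB. destruct (classic (v = u)) as [->|Hvu].
    + rewrite (Huw u (Eirr u)) in Hvv.
      destruct (exists_last HB) as [B0 [z HBz]]. subst B.
      destruct (classic (c = one u)) as [Hc|Hc].
      * rewrite Hc, Ec_one, app_nil_r in Hvv.
        destruct (JR _ HI u A (B0 ++ [z]) Hvv HA (app1_ne _ _))
          as [w [Hwv [HE [A' [q [B' [Heq [HfA [HfB Hq]]]]]]]]].
        exists w; split; auto; split; auto. exists A', q, (B' ++ Ec u c).
        rewrite Huw by auto. rewrite Heq. split; [rewrite <- app_assoc; reflexivity|].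
        split; auto. split; auto. rewrite fil_app, HfB, Hc, Ec_one, app_nil_r; auto.
      * rewrite (Ec_ne _ _ Hc) in Hvv. rewrite app_assoc in Hvv. apply app_inj_tail in Hvv.
        destruct Hvv as [Hvv Hz]. subst z.
        destruct (classic (B0 = [])) as [->|HB0].
        -- rewrite app_nil_r in Hvv.
           destruct HN as [HN|[w [Hwu' [HE [Hne Hl]]]]].
           { exfalso. apply HA. rewrite <- Hvv, HN. reflexivity. }
           exists w. split; auto. split; auto.
           exists (removelast (T u w)), (last (T u w) (dflt u)), [lett u c].
           rewrite Huw by auto. rewrite Ec_ne by auto. split.
           { rewrite (app_removelast_last (dflt u) Hne) at 1. rewrite <- app_assoc. reflexivity. }
           split.
           { rewrite (fil_rl_nv u _ (dflt u)); [|auto|eapply neq_from; [exact Hl|intro; subst; auto]].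
             rewrite (J2 _ HI); auto. }
           split; [apply fil_one; reflexivity|auto].
        -- destruct (JR _ HI u A B0 Hvv HA HB0) as [w [Hwv [HE [A' [q [B' [Heq [HfA [HfB Hq]]]]]]]]].
           exists w; split; auto; split; auto. exists A', q, (B' ++ [lett u c]).
           rewrite Huw by auto. rewrite Ec_ne, Heq by auto. split; [rewrite <- app_assoc; reflexivity|].
           split; auto. split; auto. rewrite fil_app, HfB, fil_one; reflexivity.
    + rewrite (App_out u c T v v) in Hvv by (apply inU_vv; auto).
      destruct (JR _ HI v A B Hvv HA HB) as [w [Hwv [HE [A' [q [B' [Heq [HfA [HfB Hq]]]]]]]]].
      exists w; split; auto; split; auto.
      destruct (classic (w = u)) as [->|Hwu'].
      * exists A', q, (B' ++ Ec u c). rewrite Hwu by (apply nE_sym; auto). rewrite Heq.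
        split; [rewrite <- app_assoc; reflexivity|]. split; auto. split; auto.
        rewrite fil_app, fil_Ec_other, app_nil_r by (intro; subst; auto); auto.
      * rewrite App_out by (apply inU_vw; auto). exists A', q, B'; auto.
Qed.

Lemma act_inv u a S : Inv S -> Inv (actv u a S).
Proof. intros HI. destruct (Tst_inv u S HI). apply App_inv; auto. Qed.

Lemma upd u S p q : Inv S -> inU u p q -> S p q = Tst u S p q ++ Ec u (tau u S).
Proof.
  intros HI Hi. rewrite Tst_in by auto. destruct (classic (tail u S)) as [Ht|Ht].
  - rewrite trunc_t, Ec_ne by (auto using tau_nonone).
    destruct Hi as [[-> Hq]|[-> Hp]].
    + apply F1; auto.
    + rewrite (J0 _ HI p u). apply F1; auto.
  - rewrite trunc_f, tau_f, Ec_one, app_nil_r; auto.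
Qed.

Lemma App_one u T : App u (one u) T = T.
Proof.
  apply functional_extensionality; intro p; apply functional_extensionality; intro q.
  unfold App; destruct (excluded_middle_informative _); auto. rewrite Ec_one, app_nil_r; auto.
Qed.

Lemma tail_App_ne u c T : c <> one u -> tail u (App u c T).
Proof.
  intros Hc w Hw. rewrite App_in by (apply inU_uw; auto). rewrite Ec_ne by auto.
  split; [apply app1_ne|]. rewrite last_last. reflexivity.
Qed.

Lemma tau_App u c T : NT u T -> tau u (App u c T) = c.
Proof.
  intros HN. destruct (classic (c = one u)) as [->|Hc].
  - rewrite App_one. apply tau_f, NT_notail; auto.
  - rewrite tau_t by (apply tail_App_ne; auto).
    rewrite App_in by (apply inU_uw, Eirr). rewrite Ec_ne, last_last by auto. apply vval_lett.
Qed.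

Lemma Tst_App u c T : NT u T -> Tst u (App u c T) = T.
Proof.
  intros HN.
  apply functional_extensionality; intro p; apply functional_extensionality; intro q.
  destruct (classic (inU u p q)) as [Hi|Hi].
  - rewrite Tst_in, App_in by auto. destruct (classic (c = one u)) as [->|Hc].
    + rewrite Ec_one, app_nil_r. rewrite trunc_f; auto. rewrite App_one. apply NT_notail; auto.
    + rewrite trunc_t by (apply tail_App_ne; auto). rewrite Ec_ne, removelast_last; auto.
  - rewrite Tst_out, App_out; auto.
Qed.

Lemma tau_act u a S : Inv S -> tau u (actv u a S) = mul u (tau u S) a.
Proof. intros HI. destruct (Tst_inv u S HI). apply tau_App; auto. Qed.

Lemma Tst_act u a S : Inv S -> Tst u (actv u a S) = Tst u S.
Proof. intros HI. destruct (Tst_inv u S HI). apply Tst_App; auto. Qed.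

Lemma act_mul u a b S : Inv S -> actv u b (actv u a S) = actv u (mul u a b) S.
Proof.
  intros HI. set (S1 := actv u a S). unfold actv at 1 2. subst S1.
  rewrite tau_act, Tst_act, massoc; auto.
Qed.

Lemma act_one u S : Inv S -> actv u (one u) S = S.
Proof.
  intros HI. unfold actv. rewrite mone_r.
  apply functional_extensionality; intro p; apply functional_extensionality; intro q.
  destruct (classic (inU u p q)) as [Hi|Hi].
  - rewrite App_in by auto. rewrite <- upd; auto.
  - rewrite App_out, Tst_out; auto.
Qed.

Lemma local_tail v S1 S : (forall w, ~ E v w -> S1 v w = S v w) -> (tail v S1 <-> tail v S).
Proof.
  intros H. unfold tail. split; intros Ht w Hw; specialize (Ht w Hw).
  - rewrite H in Ht; auto.
  - rewrite H; auto.
Qed.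

Lemma local_tau v S1 S : (forall w, ~ E v w -> S1 v w = S v w) -> tau v S1 = tau v S.
Proof.
  intros H. pose proof (local_tail v S1 S H) as Ht. unfold tau.
  destruct (excluded_middle_informative (tail v S1)), (excluded_middle_informative (tail v S)); try tauto.
  rewrite H; auto.
Qed.

Lemma trunc_ext v S1 S X : (tail v S1 <-> tail v S) -> trunc v S1 X = trunc v S X.
Proof.
  intros H. unfold trunc.
  destruct (excluded_middle_informative (tail v S1)), (excluded_middle_informative (tail v S)); tauto.
Qed.

Lemma notinU_adj u v w : E u v -> ~ E v w -> ~ inU u v w.
Proof. intros H1 H2 [[-> _]|[-> H]]. apply (Eirr _ H1). apply H, H1. Qed.

Lemma act_local u v a S : E u v -> forall w, ~ E v w -> actv u a S v w = S v w.
Proof. intros H w Hw. unfold actv. rewrite App_out, Tst_out; auto; apply notinU_adj; auto. Qed.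

Lemma tau_act_adj u v a S : E u v -> tau v (actv u a S) = tau v S.
Proof. intros H. apply local_tau. apply act_local; auto. Qed.
Lemma tail_act_adj u v a S : E u v -> (tail v (actv u a S) <-> tail v S).
Proof. intros H. apply local_tail. apply act_local; auto. Qed.

Lemma inU_disj u v p q : E u v -> inU u p q -> inU v p q -> False.
Proof.
  intros H [[-> H1]|[-> H1]] [[H2 H3]|[H2 H3]]; subst.
  - apply (Eirr _ H).
  - apply H1, H.
  - apply H1, H.
  - apply (Eirr _ H).
Qed.

Lemma act_comm u v a b S : E u v -> actv v b (actv u a S) = actv u a (actv v b S).
Proof.
  intros Huv. assert (Hvu := Esym _ _ Huv).
  set (S1 := actv u a S). set (S2 := actv v b S).
  assert (H1 : tau v S1 = tau v S) by (apply tau_act_adj; auto).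
  assert (H2 : tau u S2 = tau u S) by (apply tau_act_adj; auto).
  assert (H3 : tail v S1 <-> tail v S) by (apply tail_act_adj; auto).
  assert (H4 : tail u S2 <-> tail u S) by (apply tail_act_adj; auto).
  unfold actv at 1 2. rewrite H1, H2.
  apply functional_extensionality; intro p; apply functional_extensionality; intro q.
  destruct (classic (inU v p q)) as [Hv|Hv].
  - assert (Hu : ~ inU u p q) by (intro; eapply inU_disj; eauto).
    rewrite App_in, Tst_in, App_out, Tst_out by auto.
    subst S1 S2. unfold actv. rewrite App_out, Tst_out by auto. rewrite App_in, Tst_in by auto.
    rewrite (trunc_ext _ _ _ _ H3). reflexivity.
  - destruct (classic (inU u p q)) as [Hu|Hu].
    + rewrite App_out, Tst_out, App_in, Tst_in by auto.
      subst S1 S2. unfold actv. rewrite App_in, Tst_in by auto. rewrite App_out, Tst_out by auto.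
      rewrite (trunc_ext _ _ _ _ H4). reflexivity.
    + rewrite App_out, Tst_out, App_out, Tst_out by auto.
      subst S1 S2. unfold actv. rewrite App_out, Tst_out, App_out, Tst_out by auto. reflexivity.
Qed.

Lemma tau_act_other u v a S : u <> v -> ~ E u v -> mul u (tau u S) a <> one u ->
  tau v (actv u a S) = one v.
Proof.
  intros Huv HE Hc. apply tau_f. intros Ht. destruct (Ht u (nE_sym _ _ HE)) as [_ Hl].
  unfold actv in Hl. rewrite App_in in Hl by (unfold inU; right; auto).
  rewrite Ec_ne, last_last in Hl by auto. simpl in Hl. auto.
Qed.

Lemma act_cancel u a S S' : Inv S -> Inv S' -> actv u a S = actv u a S' -> tau u S = tau u S' -> S = S'.
Proof.
  intros HI HI' Heq Ht.
  apply functional_extensionality; intro p; apply functional_extensionality; intro q.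
  pose proof (f_equal (fun X => X p q) Heq) as H. simpl in H. unfold actv in H. rewrite Ht in H.
  destruct (classic (inU u p q)) as [Hi|Hi].
  - rewrite !App_in in H by auto. apply app_inv_tail in H.
    rewrite (upd u S p q), (upd u S' p q), H, Ht; auto.
  - rewrite !App_out, !Tst_out in H by auto. auto.
Qed.

Definition act (x : L) (S : St) : St := actv (projT1 x) (projT2 x) S.
Definition run (S : St) (r : list L) : St := fold_left (fun S x => act x S) r S.
Definition S0 : St := fun _ _ => [].
Definition nf (r : list L) : St := run S0 r.
Local Notation eqv := (gp_rel E mul one).

Lemma S0_inv : Inv S0.
Proof.
  constructor; unfold S0; auto.
  - intros p q v b H; destruct H.
  - intros v A B H HA HB. symmetry in H. apply app_eq_nil in H. tauto.
Qed.

Lemma run_app S r1 r2 : run S (r1 ++ r2) = run (run S r1) r2.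
Proof. unfold run. apply fold_left_app. Qed.

Lemma run_inv S r : Inv S -> Inv (run S r).
Proof. revert S; induction r as [|x r IH]; intros S HS; simpl; auto. apply IH. apply act_inv; auto. Qed.

Lemma nf_inv r : Inv (nf r).
Proof. apply run_inv, S0_inv. Qed.

Lemma nf_snoc r x : nf (r ++ [x]) = actv (projT1 x) (projT2 x) (nf r).
Proof. unfold nf. rewrite run_app. reflexivity. Qed.

Lemma nf_snoc' r v a : nf (r ++ [lett v a]) = actv v a (nf r).
Proof. apply nf_snoc. Qed.

Lemma gp_run x y : eqv x y -> forall S, Inv S -> run S x = run S y.
Proof.
  induction 1; intros S HS.
  - auto.
  - symmetry; auto.
  - rewrite IHgp_rel1, IHgp_rel2; auto.
  - rewrite !run_app. rewrite IHgp_rel; auto using run_inv.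
  - simpl. unfold act. simpl. apply act_one; auto.
  - simpl. unfold act. simpl. apply act_mul; auto.
  - simpl. unfold act. simpl. apply act_comm; auto.
Qed.

Lemma nf_eqv x y : eqv x y -> nf x = nf y.
Proof. intros H. apply gp_run; auto using S0_inv. Qed.

Lemma eqv_refl x : eqv x x.
Proof. apply gp_refl. Qed.
Lemma eqv_sym x y : eqv x y -> eqv y x.
Proof. apply gp_sym. Qed.
Lemma eqv_trans x y z : eqv x y -> eqv y z -> eqv x z.
Proof. apply gp_trans. Qed.
Lemma eqv_app x y x' y' : eqv x y -> eqv x' y' -> eqv (x ++ x') (y ++ y').
Proof.
  intros H H'. eapply gp_trans.
  - pose proof (gp_ctx [] x' H) as H1. simpl in H1. exact H1.
  - pose proof (gp_ctx y [] H') as H2. rewrite !app_nil_r in H2. exact H2.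
Qed.
Lemma eqv_appl p x y : eqv x y -> eqv (p ++ x) (p ++ y).
Proof. intros; apply eqv_app; auto using eqv_refl. Qed.
Lemma eqv_appr p x y : eqv x y -> eqv (x ++ p) (y ++ p).
Proof. intros; apply eqv_app; auto using eqv_refl. Qed.

Lemma eqv_one v : eqv [lett v (one v)] [].
Proof. apply gp_one. Qed.
Lemma eqv_mul v a b : eqv [lett v a; lett v b] [lett v (mul v a b)].
Proof. apply gp_mul. Qed.
Lemma eqv_comm u v a b : E u v -> eqv [lett u a; lett v b] [lett v b; lett u a].
Proof. apply gp_comm. Qed.

Lemma eqv_drop_one r v : eqv r (r ++ [lett v (one v)]).
Proof. rewrite <- (app_nil_r r) at 1. apply eqv_appl, eqv_sym, eqv_one. Qed.

Lemma tau_S0 u : tau u S0 = one u.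
Proof. apply tau_f. intros Ht. destruct (Ht u (Eirr u)); auto. Qed.

Lemma T4s : forall n r u, length r <= n -> tau u (nf r) <> one u ->
  exists r', length r' < length r /\ eqv r (r' ++ [lett u (tau u (nf r))]).
Proof.
  induction n as [|n IH]; intros r u Hl Hne.
  - destruct r; [|simpl in Hl; lia]. exfalso; apply Hne, tau_S0.
  - destruct (classic (r = [])) as [->|Hr]; [exfalso; apply Hne, tau_S0|].
    destruct (exists_last Hr) as [r0 [x ->]]. rewrite length_app in Hl; simpl in Hl.
    rewrite length_app; simpl.
    assert (W : forall u', exists r', length r' <= length r0 /\ eqv r0 (r' ++ [lett u' (tau u' (nf r0))])).
    { intros u'. destruct (classic (tau u' (nf r0) = one u')) as [H1|H1].
      - exists r0. split; auto. rewrite H1. apply eqv_drop_one.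
      - destruct (IH r0 u' ltac:(lia) H1) as [r' [H2 H3]]. exists r'. split; [lia|auto]. }
    destruct x as [v a]. change (existT (fun v => C v) v a) with (lett v a) in *.
    rewrite nf_snoc' in *.
    destruct (classic (v = u)) as [<-|Hvu].
    + destruct (W v) as [r' [H1 H2]]. exists r'. split; [lia|].
      rewrite tau_act by apply nf_inv.
      eapply eqv_trans; [apply eqv_appr, H2|]. rewrite <- app_assoc. simpl.
      apply eqv_appl, eqv_mul.
    + destruct (classic (E v u)) as [HE|HE].
      * rewrite tau_act_adj in * by auto.
        destruct (IH r0 u ltac:(lia) Hne) as [r' [H1 H2]]. exists (r' ++ [lett v a]).
        rewrite length_app; simpl. split; [lia|].
        eapply eqv_trans; [apply eqv_appr, H2|]. rewrite <- !app_assoc. simpl.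
        apply eqv_appl, eqv_comm. apply Esym; auto.
      * destruct (classic (mul v (tau v (nf r0)) a = one v)) as [Hc|Hc].
        2:{ exfalso. apply Hne. apply tau_act_other; auto. }
        destruct (W v) as [r1 [H1 H2]].
        assert (Hrr : eqv (r0 ++ [lett v a]) r1).
        { eapply eqv_trans; [apply eqv_appr, H2|]. rewrite <- app_assoc. simpl.
          rewrite <- (app_nil_r r1) at 2. apply eqv_appl. eapply eqv_trans; [apply eqv_mul|].
          rewrite Hc. apply eqv_one. }
        pose proof (nf_eqv _ _ Hrr) as Hnf. rewrite nf_snoc' in Hnf. rewrite Hnf in *.
        destruct (IH r1 u ltac:(lia) Hne) as [r' [H3 H4]]. exists r'. split; [lia|].
        eapply eqv_trans; [exact Hrr|exact H4].
Qed.

Lemma T4w r u : exists r', length r' <= length r /\ eqv r (r' ++ [lett u (tau u (nf r))]).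
Proof.
  destruct (classic (tau u (nf r) = one u)) as [H1|H1].
  - exists r. split; auto. rewrite H1. apply eqv_drop_one.
  - destruct (T4s (length r) r u (le_n _) H1) as [r' [H2 H3]]. exists r'. split; [lia|auto].
Qed.

Lemma faith_step n g0 x h : (forall g h, length g + length h <= n -> nf g = nf h -> eqv g h) ->
  length (g0 ++ [x]) + length h <= S n -> nf (g0 ++ [x]) = nf h -> eqv (g0 ++ [x]) h.
Proof.
  intros IH Hl Hnf. rewrite length_app in Hl; simpl in Hl.
  destruct x as [v a]. change (existT (fun v => C v) v a) with (lett v a) in *.
  set (g := g0 ++ [lett v a]) in *.
  set (t := tau v (nf g)).
  destruct (T4w g0 v) as [g0' [H1 H2]].
  assert (Hg : eqv g (g0' ++ [lett v t])).
  { subst g t. rewrite nf_snoc', tau_act by apply nf_inv.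
    eapply eqv_trans; [apply eqv_appr, H2|]. rewrite <- app_assoc. apply eqv_appl, eqv_mul. }
  destruct (T4w h v) as [h' [H3 H4]].
  rewrite <- Hnf in H4. fold t in H4.
  pose proof (nf_eqv _ _ Hg) as Ng. pose proof (nf_eqv _ _ H4) as Nh.
  rewrite nf_snoc' in Ng, Nh.
  assert (Hact : actv v t (nf g0') = actv v t (nf h')) by (rewrite <- Ng, <- Nh; auto).
  assert (Htau : tau v (nf g0') = tau v (nf h')).
  { apply (mcancel v _ _ t). rewrite <- !tau_act by apply nf_inv. rewrite Hact. reflexivity. }
  pose proof (act_cancel v t _ _ (nf_inv _) (nf_inv _) Hact Htau) as Heq.
  assert (Hgh : eqv g0' h') by (apply IH; auto; lia).
  eapply eqv_trans; [exact Hg|]. eapply eqv_trans; [apply eqv_appr, Hgh|]. apply eqv_sym; auto.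
Qed.

Lemma faithful g h : nf g = nf h -> eqv g h.
Proof.
  assert (forall n g h, length g + length h <= n -> nf g = nf h -> eqv g h).
  { induction n as [|n IH]; intros g' h' Hl Hnf.
    - destruct g'; [|simpl in Hl; lia]. destruct h'; [|simpl in Hl; lia]. apply eqv_refl.
    - destruct (classic (g' = [])) as [->|Hg].
      + destruct (classic (h' = [])) as [->|Hh]; [apply eqv_refl|].
        destruct (exists_last Hh) as [h0 [x ->]]. apply eqv_sym.
        apply (faith_step n).
        * intros g1 h1 Hl1 Hn1. apply eqv_sym, IH; [lia|auto].
        * simpl in Hl. simpl. lia.
        * auto.
      + destruct (exists_last Hg) as [g0 [x ->]]. apply (faith_step n); auto. }
  intros; eauto.
Qed.

Lemma rc1 g h x : eqv (g ++ [x]) (h ++ [x]) -> eqv g h.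
Proof.
  intros H. apply nf_eqv in H. rewrite !nf_snoc in H.
  apply faithful. apply (act_cancel _ _ _ _ (nf_inv _) (nf_inv _) H).
  apply (mcancel _ _ _ (projT2 x)). rewrite <- !tau_act by apply nf_inv. rewrite H; auto.
Qed.

Lemma rc g h c : eqv (g ++ c) (h ++ c) -> eqv g h.
Proof.
  revert g h. induction c as [|x c IH] using rev_ind; intros g h H.
  - rewrite !app_nil_r in H; auto.
  - rewrite !app_assoc in H. apply rc1 in H. auto.
Qed.

Lemma notail a : (forall q, tau q (nf a) = one q) -> eqv a [].
Proof.
  assert (forall n a, length a <= n -> (forall q, tau q (nf a) = one q) -> eqv a []).
  { induction n as [|n IH]; intros a' Hl Ht.
    - destruct a'; [apply eqv_refl|simpl in Hl; lia].
    - destruct (classic (a' = [])) as [->|Ha]; [apply eqv_refl|].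
      destruct (exists_last Ha) as [a0 [x ->]]. rewrite length_app in Hl; simpl in Hl.
      destruct x as [v e]. change (existT (fun v => C v) v e) with (lett v e) in *.
      destruct (T4w a0 v) as [a1 [H1 H2]].
      assert (Hr : eqv (a0 ++ [lett v e]) a1).
      { eapply eqv_trans; [apply eqv_appr, H2|]. rewrite <- app_assoc. simpl.
        rewrite <- (app_nil_r a1) at 2. apply eqv_appl. eapply eqv_trans; [apply eqv_mul|].
        specialize (Ht v). rewrite nf_snoc', tau_act in Ht by apply nf_inv. rewrite Ht. apply eqv_one. }
      eapply eqv_trans; [exact Hr|]. apply IH; [lia|].
      intros q. rewrite <- (nf_eqv _ _ Hr). auto. }
  intros; eauto.
Qed.

Hypothesis mlcm : forall v (a b : C v),
  (forall w, ~ (in_left_ideal (@eq (C v)) (mul v) a w /\ in_left_ideal (@eq (C v)) (mul v) b w)) \/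
  (exists m, forall w, (in_left_ideal (@eq (C v)) (mul v) a w /\ in_left_ideal (@eq (C v)) (mul v) b w)
      <-> in_left_ideal (@eq (C v)) (mul v) m w).

Definition I (p w : list L) : Prop := exists c, eqv w (c ++ p).
Definition ulet (z : L) : Prop := exists c, mul (projT1 z) c (projT2 z) = one (projT1 z).
Definition adjp (p : V) (z : L) : Prop := projT1 z = p \/ E p (projT1 z).
Definition PE (p q : list L) : Prop :=
  (forall w, ~ (I p w /\ I q w)) \/ (exists m, forall w, (I p w /\ I q w) <-> I m w).

Lemma I_gen p p' w : eqv p p' -> I p w -> I p' w.
Proof. intros H [c Hc]. exists c. eapply eqv_trans; [exact Hc|]. apply eqv_appl; auto. Qed.
Lemma I_w p w w' : eqv w w' -> I p w -> I p w'.
Proof. intros H [c Hc]. exists c. eapply eqv_trans; [apply eqv_sym, H|exact Hc]. Qed.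
Lemma I_self p : I p p.
Proof. exists []. apply eqv_refl. Qed.
Lemma I_app c p : I p (c ++ p).
Proof. exists c. apply eqv_refl. Qed.

Lemma DIV u e w : I [lett u e] w <-> exists d, tau u (nf w) = mul u d e.
Proof.
  split.
  - intros [c Hc]. exists (tau u (nf c)). rewrite (nf_eqv _ _ Hc), nf_snoc', tau_act; auto using nf_inv.
  - intros [d Hd]. destruct (T4w w u) as [w' [_ Hw]]. rewrite Hd in Hw.
    exists (w' ++ [lett u d]). eapply eqv_trans; [exact Hw|]. rewrite <- app_assoc.
    apply eqv_appl, eqv_sym, eqv_mul.
Qed.

Lemma TADJ u A c : Forall (fun z => E u (projT1 z)) A -> tau u (nf (c ++ A)) = tau u (nf c).
Proof.
  revert c. induction A as [|z A IH]; intros c HA.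
  - rewrite app_nil_r; auto.
  - inversion HA; subst. replace (c ++ z :: A) with ((c ++ [z]) ++ A) by (rewrite <- app_assoc; reflexivity).
    rewrite IH by auto. rewrite nf_snoc. apply tau_act_adj. apply Esym; auto.
Qed.

Lemma comm_word q b W : Forall (fun z => E q (projT1 z)) W -> eqv ([lett q b] ++ W) (W ++ [lett q b]).
Proof.
  induction W as [|z W IH]; intros HW; simpl.
  - apply eqv_refl.
  - inversion HW; subst. destruct z as [v a]. change (existT (fun v => C v) v a) with (lett v a) in *.
    eapply eqv_trans.
    + apply (eqv_app [lett q b; lett v a] [lett v a; lett q b] W W); [apply eqv_comm; auto|apply eqv_refl].
    + simpl. apply (eqv_appl [lett v a]). apply IH; auto.
Qed.

Fixpoint piq (q : V) (B : list L) : C q :=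
  match B with
  | [] => one q
  | z :: B' => if isv q z then mul q (vval q z) (piq q B') else piq q B'
  end.
Definition nq (q : V) (z : L) : bool := negb (isv q z).

Lemma SPLIT q B : Forall (adjp q) B -> eqv B (filter (nq q) B ++ [lett q (piq q B)]).
Proof.
  induction B as [|z B IH]; intros HB; simpl.
  - apply eqv_sym, eqv_one.
  - inversion HB; subst. specialize (IH H2).
    assert (Hadj : Forall (fun z => E q (projT1 z)) (filter (nq q) B)).
    { apply Forall_forall. intros y Hy. apply filter_In in Hy. destruct Hy as [Hy1 Hy2].
      rewrite Forall_forall in H2. destruct (H2 y Hy1) as [H|H]; auto.
      unfold nq in Hy2. rewrite isv_t in Hy2 by auto. discriminate. }
    unfold nq at 1. destruct (classic (projT1 z = q)) as [Hz|Hz].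
    + rewrite (isv_t _ _ Hz). simpl.
      rewrite (lett_vval q z Hz) at 1.
      eapply eqv_trans; [apply (eqv_appl [lett q (vval q z)]), IH|].
      rewrite app_assoc. eapply eqv_trans; [apply eqv_appr, comm_word, Hadj|].
      rewrite <- app_assoc. apply eqv_appl. simpl. apply eqv_mul.
    + rewrite (isv_f _ _ Hz). simpl. apply (eqv_appl [z]). auto.
Qed.

Lemma filter_nq_len q B : length (filter (nq q) B) <= length B.
Proof. induction B; simpl; auto. destruct (nq q a); simpl; lia. Qed.

Lemma nq_q q s : nq q (lett q s) = false.
Proof. unfold nq. rewrite isv_t; reflexivity. Qed.

Lemma UNIT U : Forall ulet U -> forall c, exists d, eqv c (d ++ U).
Proof.
  induction U as [|z U IH]; intros HU c.
  - exists c. rewrite app_nil_r. apply eqv_refl.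
  - inversion HU; subst. destruct (IH H2 c) as [d1 Hd1].
    destruct z as [v b]. destruct H1 as [d0 Hd0]. simpl in Hd0.
    exists (d1 ++ [lett v d0]). eapply eqv_trans; [exact Hd1|].
    assert (Hx : eqv (d1 ++ U) (d1 ++ ([lett v d0; lett v b] ++ U))).
    { apply eqv_appl. rewrite <- (app_nil_l U) at 1. apply eqv_appr.
      apply eqv_sym. eapply eqv_trans; [apply eqv_mul|]. rewrite Hd0. apply eqv_one. }
    eapply eqv_trans; [exact Hx|]. rewrite <- app_assoc. apply eqv_refl.
Qed.

Lemma I_unit U A w : Forall ulet U -> (I (U ++ A) w <-> I A w).
Proof.
  intros HU. split.
  - intros [c Hc]. exists (c ++ U). rewrite <- app_assoc; auto.
  - intros [c Hc]. destruct (UNIT U HU c) as [d Hd]. exists d.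
    eapply eqv_trans; [exact Hc|]. rewrite app_assoc. apply eqv_appr; auto.
Qed.

Lemma T3c p q s S : Inv S -> q <> p -> ~ E q p -> tau p (actv q s S) <> one p ->
  mul q (tau q S) s = one q.
Proof.
  intros HI H1 H2 H3. apply NNPP. intro H4. apply H3. apply tau_act_other; auto.
Qed.

Lemma claim : forall n a p, length a <= n ->
  (forall c, tau p (nf (c ++ a)) = tau p (nf a)) \/
  exists U A, Forall ulet U /\ Forall (adjp p) A /\ eqv a (U ++ A) /\ length U + length A <= length a.
Proof.
  induction n as [|n IH]; intros a p Hl.
  - right. exists [], []. destruct a; [|simpl in Hl; lia]. repeat split; auto. apply eqv_refl.
  - destruct (classic (forall c, tau p (nf (c ++ a)) = tau p (nf a))) as [H|H]; [left; auto|right].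
    apply not_all_ex_not in H. destruct H as [c0 Hc0].
    destruct (classic (exists q, tau q (nf a) <> one q /\ (q = p \/ E p q))) as [[q [Hq Hqp]]|HA].
    + destruct (T4s _ a q (le_n _) Hq) as [a1 [Hl1 Ha1]].
      set (s := tau q (nf a)) in *.
      destruct (IH a1 p ltac:(lia)) as [H1|[U1 [A1 [HU1 [HA1 [He1 Hle1]]]]]].
      * exfalso. apply Hc0.
        rewrite (nf_eqv _ _ Ha1). rewrite (nf_eqv _ _ (eqv_appl c0 _ _ Ha1)).
        rewrite app_assoc, !nf_snoc'. destruct Hqp as [<-|HE].
        -- rewrite !tau_act by apply nf_inv. rewrite H1. rewrite <- (app_nil_l a1) at 2. rewrite H1. reflexivity.
        -- rewrite !tau_act_adj by (apply Esym; auto). rewrite H1. rewrite <- (app_nil_l a1) at 2. rewrite H1. reflexivity.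
      * exists U1, (A1 ++ [lett q s]). split; auto. split.
        { apply Forall_app; split; [exact HA1|constructor; [exact Hqp|constructor]]. }
        split.
        { eapply eqv_trans; [exact Ha1|]. rewrite app_assoc. apply eqv_appr; auto. }
        rewrite length_app. simpl. lia.
    + destruct (classic (forall q, tau q (nf a) = one q)) as [H0|H0].
      { exists [], []. repeat split; auto. apply notail; auto. simpl; lia. }
      apply not_all_ex_not in H0. destruct H0 as [q Hq].
      assert (Hqp : q <> p /\ ~ E p q) by (split; intro; apply HA; exists q; auto).
      destruct Hqp as [Hqp HEpq].
      assert (Htp : tau p (nf a) = one p).
      { apply NNPP; intro; apply HA; exists p; auto. }
      destruct (T4s _ a q (le_n _) Hq) as [a1 [Hl1 Ha1]].
      set (s := tau q (nf a)) in *.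
      assert (Hc0' : tau p (actv q s (nf (c0 ++ a1))) <> one p).
      { rewrite <- nf_snoc', <- app_assoc, <- (nf_eqv _ _ (eqv_appl c0 _ _ Ha1)), <- Htp. auto. }
      apply T3c in Hc0'; auto using nf_inv, nE_sym.
      destruct (IH a1 q ltac:(lia)) as [H1|[U1 [A1 [HU1 [HA1 [He1 Hle1]]]]]].
      * exfalso. apply Hq. fold s.
        assert (Hs : s = mul q (tau q (nf a1)) s).
        { unfold s at 1. rewrite (nf_eqv _ _ Ha1), nf_snoc', tau_act by apply nf_inv. reflexivity. }
        rewrite H1 in Hc0'. rewrite <- Hs in Hc0'. auto.
      * set (B := A1 ++ [lett q s]).
        assert (HB : Forall (adjp q) B).
        { apply Forall_app; split; auto. constructor; auto. left; reflexivity. }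
        pose proof (SPLIT q B HB) as HS.
        set (Bf := filter (nq q) B) in *. set (pi := piq q B) in *.
        assert (HBf : Forall (fun z => E q (projT1 z)) Bf).
        { apply Forall_forall. intros y Hy. apply filter_In in Hy. destruct Hy as [Hy1 Hy2].
          rewrite Forall_forall in HB. destruct (HB y Hy1) as [Hh|Hh]; auto.
          unfold nq in Hy2. rewrite isv_t in Hy2 by auto. discriminate. }
        assert (HlBf : length Bf <= length A1).
        { subst Bf B. rewrite filter_app. simpl. rewrite nq_q, app_nil_r. apply filter_nq_len. }
        assert (Ha : eqv a (U1 ++ Bf ++ [lett q pi])).
        { eapply eqv_trans; [exact Ha1|]. eapply eqv_trans; [apply eqv_appr, He1|].
          rewrite <- app_assoc. apply eqv_appl. exact HS. }
        assert (Hpi : mul q (tau q (nf ((c0 ++ U1) ++ Bf))) pi = one q).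
        { apply T3c with (p := p); [apply nf_inv|auto|apply nE_sym; auto|].
          rewrite <- nf_snoc', <- !app_assoc, <- (nf_eqv _ _ (eqv_appl c0 _ _ Ha)), <- Htp.
          intro Hx. apply Hc0. rewrite Hx. reflexivity. }
        assert (Hpu : ulet (lett q pi)) by (exists (tau q (nf ((c0 ++ U1) ++ Bf))); exact Hpi).
        assert (Ha' : eqv a ((U1 ++ [lett q pi]) ++ Bf)).
        { eapply eqv_trans; [exact Ha|]. rewrite <- app_assoc. apply eqv_appl.
          apply eqv_sym, comm_word; auto. }
        destruct (IH Bf p ltac:(lia)) as [H2|[U2 [A2 [HU2 [HA2 [He2 Hle2]]]]]].
        -- exfalso. apply Hc0.
           rewrite (nf_eqv _ _ Ha'), (nf_eqv _ _ (eqv_appl c0 _ _ Ha')). rewrite app_assoc. rewrite !H2. reflexivity.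
        -- exists (U1 ++ [lett q pi] ++ U2), A2. split.
           { apply Forall_app; split; auto. apply Forall_app; split; auto. }
           split; auto. split.
           { eapply eqv_trans; [exact Ha'|]. rewrite <- !app_assoc. apply eqv_appl.
             simpl. apply (eqv_appl [lett q pi]). auto. }
           rewrite !length_app. simpl. lia.
Qed.

Lemma WL u e a : PE [lett u e] a.
Proof.
  destruct (claim (length a) a u (le_n _)) as [H1|[U [A [HU [HA [Ha _]]]]]].
  - set (t := tau u (nf a)).
    destruct (classic (exists d, t = mul u d e)) as [Hd|Hd].
    + right. exists a. intros w. split; [tauto|]. intros Hw. split; auto.
      apply DIV. destruct Hw as [c Hc]. rewrite (nf_eqv _ _ Hc), H1. auto.
    + left. intros w [Hx [c Hc]]. apply Hd. apply DIV in Hx. rewrite (nf_eqv _ _ Hc), H1 in Hx. auto.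
  - assert (HIa : forall w, I a w <-> I A w).
    { intros w. split; intros Hw.
      - apply (I_unit U A w HU). apply (I_gen a); auto.
      - apply (I_gen (U ++ A)); [apply eqv_sym; auto|]. apply I_unit; auto. }
    pose proof (SPLIT u A HA) as HS. set (Af := filter (nq u) A) in *. set (pi := piq u A) in *.
    assert (HAf : Forall (fun z => E u (projT1 z)) Af).
    { apply Forall_forall. intros y Hy. apply filter_In in Hy. destruct Hy as [Hy1 Hy2].
      rewrite Forall_forall in HA. destruct (HA y Hy1) as [Hh|Hh]; auto.
      unfold nq in Hy2. rewrite isv_t in Hy2 by auto. discriminate. }
    assert (Htau : forall c, tau u (nf (c ++ A)) = mul u (tau u (nf c)) pi).
    { intros c. rewrite (nf_eqv _ _ (eqv_appl c _ _ HS)), app_assoc, nf_snoc', tau_act by apply nf_inv.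
      rewrite TADJ; auto. }
    destruct (mlcm u e pi) as [Hdis|[l Hl]].
    + left. intros w [Hx Ha']. apply HIa in Ha'. destruct Ha' as [c Hc].
      apply DIV in Hx. destruct Hx as [d Hd]. rewrite (nf_eqv _ _ Hc), Htau in Hd.
      apply (Hdis (mul u (tau u (nf c)) pi)). split; [exists d; auto| exists (tau u (nf c)); auto].
    + assert (Hle : in_left_ideal eq (mul u) e l /\ in_left_ideal eq (mul u) pi l)
        by (apply Hl; exists (one u); rewrite mone_l; auto).
      destruct Hle as [[h Hh] [k0 Hk0]].
      right. exists ([lett u k0] ++ A). intros w. split.
      * intros [Hx Ha']. apply HIa in Ha'. destruct Ha' as [c Hc].
        apply DIV in Hx. destruct Hx as [d Hd]. rewrite (nf_eqv _ _ Hc), Htau in Hd.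
        assert (Hin : in_left_ideal eq (mul u) l (mul u (tau u (nf c)) pi)).
        { apply Hl. split; [exists d; auto|exists (tau u (nf c)); auto]. }
        destruct Hin as [f Hf]. rewrite Hk0, massoc in Hf. apply mcancel in Hf.
        assert (Hc' : I [lett u k0] c) by (apply DIV; exists f; auto).
        destruct Hc' as [g Hg]. exists g. eapply eqv_trans; [exact Hc|].
        rewrite app_assoc. apply eqv_appr; auto.
      * intros [g Hg]. split.
        -- apply DIV. exists (mul u (tau u (nf g)) h).
           rewrite (nf_eqv _ _ Hg), app_assoc, Htau, nf_snoc', tau_act by apply nf_inv.
           rewrite <- massoc, <- Hk0, Hh, massoc. reflexivity.
        -- apply HIa. exists (g ++ [lett u k0]). rewrite <- app_assoc. auto.
Qed.

Lemma WW b : forall a, PE a b.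
Proof.
  induction b as [|y b IH] using rev_ind; intros a.
  - right. exists a. intros w. split; [tauto|]. intros Hw; split; auto.
    exists w. rewrite app_nil_r. apply eqv_refl.
  - assert (Hyb : forall w, I (b ++ [y]) w -> I [y] w).
    { intros w [c Hc]. exists (c ++ b). rewrite <- app_assoc. auto. }
    destruct y as [v e]. change (existT (fun v => C v) v e) with (lett v e) in *.
    destruct (WL v e a) as [Hd|[m Hm]].
    + left. intros w [Ha Hb]. apply (Hd w). split; auto.
    + assert (Hmm : I [lett v e] m /\ I a m) by (apply Hm, I_self).
      destruct Hmm as [[m' Hm'] _].
      destruct (IH m') as [Hd|[m2 Hm2]].
      * left. intros w [Ha [c2 Hc2]].
        assert (Hw : I m w) by (apply Hm; split; auto; apply Hyb; exists c2; auto).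
        destruct Hw as [c Hc].
        assert (Hw2 : eqv w ((c ++ m') ++ [lett v e]))
          by (eapply eqv_trans; [exact Hc|]; rewrite <- app_assoc; apply eqv_appl; auto).
        apply (Hd (c ++ m')). split; [apply I_app|].
        exists c2. apply (rc _ _ [lett v e]). eapply eqv_trans; [apply eqv_sym, Hw2|].
        rewrite <- app_assoc; auto.
      * right. exists (m2 ++ [lett v e]). intros w. split.
        -- intros [Ha [c2 Hc2]].
           assert (Hw : I m w) by (apply Hm; split; auto; apply Hyb; exists c2; auto).
           destruct Hw as [c Hc].
           assert (Hw2 : eqv w ((c ++ m') ++ [lett v e]))
             by (eapply eqv_trans; [exact Hc|]; rewrite <- app_assoc; apply eqv_appl; auto).
           assert (Hh : I m2 (c ++ m')).
           { apply Hm2. split; [apply I_app|]. exists c2. apply (rc _ _ [lett v e]).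
             eapply eqv_trans; [apply eqv_sym, Hw2|]. rewrite <- app_assoc; auto. }
           destruct Hh as [g Hg]. exists g. eapply eqv_trans; [exact Hw2|].
           rewrite app_assoc. apply eqv_appr; auto.
        -- intros [g Hg].
           assert (Hh : I m' (g ++ m2) /\ I b (g ++ m2)) by (apply Hm2, I_app).
           destruct Hh as [[c1 Hc1] [c2 Hc2]].
           split.
           ++ assert (Hw : I m w).
              { exists c1. eapply eqv_trans; [exact Hg|]. rewrite app_assoc.
                eapply eqv_trans; [apply eqv_appr, Hc1|]. rewrite <- app_assoc.
                apply eqv_appl, eqv_sym; auto. }
              apply Hm in Hw. tauto.
           ++ exists c2. eapply eqv_trans; [exact Hg|]. rewrite app_assoc.
              eapply eqv_trans; [apply eqv_appr, Hc2|]. rewrite <- app_assoc. apply eqv_refl.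
Qed.

Lemma main_lcm : left_LCM (gp_rel E mul one) (@app L).
Proof.
  split.
  - intros a b c H. apply (rc a b c); auto.
  - intros a b. destruct (WW b a) as [H|H]; [left|right]; exact H.
Qed.
End GP.

Theorem theorem2p6 (V : Type) (E : V -> V -> Prop) (C : V -> Type)
    (mul : forall v, C v -> C v -> C v) (one : forall v, C v) :
  is_graph E ->
  (forall v, is_monoid (@mul v) (one v)) ->
  (forall v, left_LCM (@eq (C v)) (@mul v)) ->
  left_LCM (gp_rel E mul one) (@app (letter C)).
Proof.
  intros [Hirr Hsym] Hmon Hlcm.
  apply main_lcm.
  - exact Hirr.
  - exact Hsym.
  - intros v; apply (proj1 (Hmon v)).
  - intros v; apply (proj1 (proj2 (Hmon v))).
  - intros v; apply (proj2 (proj2 (Hmon v))).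
  - intros v; apply (proj1 (Hlcm v)).
  - intros v; apply (proj2 (Hlcm v)).
Qed.
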